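(* Let $\varepsilon\ge0$ and assume the continuity assumption holds. Define $H:\mathbb{R}_+^{2K}\to\mathbb{R}$ by $$H(\lambda^{(1)},\lambda^{(2)})=\sum_{s\in\{-1,1\}}\mathbb{E}\left[\max_{k\in[K]}\big(\pi_sp_k(X,s)-s(\lambda^{(1)}_k-\lambda^{(2)}_k)\big)\,\Big|\,S=s\right]+\varepsilon\sum_{k=1}^K(\lambda^{(1)}_k+\lambda^{(2)}_k),$$ and let $(\lambda^{*(1)},\lambda^{*(2)})\in\arg\min_{\mathbb{R}_+^{2K}}H$. Then a classifier $g^*$ satisfies $g^*\in\arg\min_{g\in\mathcal{G}_{\varepsilon\text{-fair}}}\mathcal{R}(g)$ if and only if $g^*\in\arg\min_{g\in\mathcal{G}}\mathcal{R}_{\lambda^{*(1)},\lambda^{*(2)}}(g)$. Moreover, the classifier $$g^*_{\varepsilon\text{-fair}}(x,s)=\arg\max_{k\in[K]}\big(\pi_sp_k(x,s)-s(\lambda^{*(1)}_k-\lambda^{*(2)}_k)\big)$$ is an optimal $\varepsilon$-fair classifier.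
   Context: $(X,S,Y)\sim\mathbb{P}$, $X\in\mathcal{X}\subset\mathbb{R}^d$, $S\in\{-1,1\}$, $Y\in[K]$, $\pi_s=\mathbb{P}(S=s)>0$, $p_k(x,s)=\mathbb{P}(Y=k\mid X=x,S=s)$. $\mathcal{G}$ is the set of measurable classifiers $g:\mathcal{X}\times\{-1,1\}\to[K]$, with risk $\mathcal{R}(g)=\mathbb{P}(g(X,S)\ne Y)$. Writing $D_k(g)=\mathbb{P}(g(X,S)=k\mid S=1)-\mathbb{P}(g(X,S)=k\mid S=-1)$, $g$ is $\varepsilon$-fair ($g\in\mathcal{G}_{\varepsilon\text{-fair}}$) if $|D_k(g)|\le\varepsilon$ for all $k\in[K]$. The $\varepsilon$-fair-risk is $\mathcal{R}_{\lambda^{(1)},\lambda^{(2)}}(g)=\mathcal{R}(g)+\sum_k\lambda^{(1)}_k[D_k(g)-\varepsilon]+\sum_k\lambda^{(2)}_k[-D_k(g)-\varepsilon]$ for $\lambda^{(1)},\lambda^{(2)}\in\mathbb{R}_+^K$. Continuity assumption: for all $k\neq j$ and $s$, $t\mapsto\mathbb{P}(p_k(X,S)-p_j(X,S)\le t\mid S=s)$ is continuous. *)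

(* Defs.v *)
From HB Require Import structures.
From mathcomp Require Import all_boot all_order all_algebra.
From mathcomp Require Import all_classical all_reals all_analysis.
Set Implicit Arguments. Unset Strict Implicit. Unset Printing Implicit Defensive.
Import Order.TTheory GRing.Theory Num.Theory.
Import numFieldNormedType.Exports.
Local Open Scope classical_set_scope.
Local Open Scope ring_scope.

(* The sensitive attribute S takes values in {-1,1}, encoded by bool:
   true <-> S = 1, false <-> S = -1. *)
Definition sval (R : realType) (s : bool) : R := if s then 1 else -1.

Section FairDefs.
Variables (R : realType) (dO : measure_display) (Om : measurableType dO)
  (P : probability Om R) (dX : measure_display) (T : measurableType dX)
  (X : Om -> T) (S : Om -> bool) (K : nat) (Y : Om -> 'I_K).

Definition piS (s : bool) : R := fine (P [set w | S w = s]).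

Definition classifier (g : T -> bool -> 'I_K) : Prop :=
  forall (s : bool) (k : 'I_K), measurable [set x | g x s = k].

(* p is a version of the conditional probability P(Y = k | X = x, S = s). *)
Definition is_cond_prob (p : 'I_K -> T -> bool -> R) : Prop :=
  (forall k s, measurable_fun setT (fun x => p k x s)) /\
  (forall k x s, 0 <= p k x s) /\
  (forall x s, \sum_(k < K) p k x s = 1) /\
  (forall (A : set T) (k : 'I_K) (s : bool), measurable A ->
     P [set w | A (X w) /\ S w = s /\ Y w = k]
     = (\int[P]_(w in [set w | A (X w) /\ S w = s]) (p k (X w) s)%:E)%E).

Definition risk (g : T -> bool -> 'I_K) : R :=
  fine (P [set w | g (X w) (S w) <> Y w]).

Definition cond_pred (g : T -> bool -> 'I_K) (k : 'I_K) (s : bool) : R :=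
  fine (P [set w | g (X w) (S w) = k /\ S w = s]) / piS s.

Definition Dk (g : T -> bool -> 'I_K) (k : 'I_K) : R :=
  cond_pred g k true - cond_pred g k false.

Definition eps_fair (eps : R) (g : T -> bool -> 'I_K) : Prop :=
  forall k, `|Dk g k| <= eps.

Definition fair_risk (eps : R) (l1 l2 : 'I_K -> R) (g : T -> bool -> 'I_K) : R :=
  risk g + \sum_(k < K) l1 k * (Dk g k - eps)
         + \sum_(k < K) l2 k * (- Dk g k - eps).

Definition score (p : 'I_K -> T -> bool -> R) (l1 l2 : 'I_K -> R)
  (k : 'I_K) (x : T) (s : bool) : R :=
  piS s * p k x s - sval R s * (l1 k - l2 k).

(* E[ max_k score_k(X,s) | S = s ] = E[max_k ... ; S = s] / P(S = s) *)
Definition cond_exp_max (p : 'I_K -> T -> bool -> R) (l1 l2 : 'I_K -> R)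
  (s : bool) : R :=
  fine (\int[P]_(w in [set w | S w = s])
          (\big[maxe/-oo%E]_(k < K) (score p l1 l2 k (X w) s)%:E))%E / piS s.

Definition Hdual (eps : R) (p : 'I_K -> T -> bool -> R) (l1 l2 : 'I_K -> R) : R :=
  cond_exp_max p l1 l2 true + cond_exp_max p l1 l2 false
  + eps * \sum_(k < K) (l1 k + l2 k).

Definition continuity_assumption (p : 'I_K -> T -> bool -> R) : Prop :=
  forall (k j : 'I_K) (s : bool), k <> j ->
    continuous (fun t : R =>
      fine (P [set w | p k (X w) (S w) - p j (X w) (S w) <= t /\ S w = s])
      / piS s).

End FairDefs.

(* Main.v *)
Require Import Defs.
From HB Require Import structures.
From mathcomp Require Import all_boot all_order all_algebra.
From mathcomp Require Import all_classical all_reals all_analysis.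
From mathcomp Require Import ring lra.
Import Order.TTheory GRing.Theory Num.Theory.
Import numFieldNormedType.Exports.
Local Open Scope classical_set_scope.
Local Open Scope ring_scope.
Set Implicit Arguments. Unset Strict Implicit. Unset Printing Implicit Defensive.

Lemma in_bigsetI (U : Type) (I : eqType) (r : seq I) (A : I -> set U) x :
  (\big[setI/setT]_(j <- r) A j) x <-> (forall j, j \in r -> A j x).
Proof.
elim: r => [|a r IH]; first by rewrite big_nil.
rewrite big_cons; split.
  by move=> [Ha /IH H] j; rewrite inE => /orP[/eqP->|/H].
by move=> H; split; [apply: H; rewrite inE eqxx|apply/IH => j jr; apply: H; rewrite inE jr orbT].
Qed.

Lemma in_bigsetU (U : Type) (I : eqType) (r : seq I) (A : I -> set U) x :
  (\big[setU/set0]_(j <- r) A j) x <-> (exists2 j, j \in r & A j x).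
Proof.
elim: r => [|a r IH]; first by rewrite big_nil; split => // -[].
rewrite big_cons; split.
  move=> [Ha|/IH [j jr Hj]]; first by exists a; rewrite ?inE ?eqxx.
  by exists j; rewrite // inE jr orbT.
move=> [j]; rewrite inE => /orP[/eqP->|jr Hj]; first by left.
by right; apply/IH; exists j.
Qed.

Lemma forall_bigsetI (U : Type) (K : nat) (A : 'I_K -> set U) :
  [set x | forall j, A j x] = \big[setI/setT]_(j < K) A j.
Proof.
apply/seteqP; split => x /=.
  by move=> H; apply/in_bigsetI => j _; apply: H.
by move/in_bigsetI => H j; apply: H; rewrite mem_index_enum.
Qed.

Lemma exists_bigsetU (U : Type) (K : nat) (A : 'I_K -> set U) :
  [set x | exists j, A j x] = \big[setU/set0]_(j < K) A j.
Proof.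
apply/seteqP; split => x /=.
  by move=> [j Hj]; apply/in_bigsetU; exists j; rewrite ?mem_index_enum.
by move/in_bigsetU => [j _ Hj]; exists j.
Qed.

Lemma mset_bool d (U : measurableType d) (f : U -> bool) :
  measurable_fun setT f -> measurable [set x | f x].
Proof. by move=> mf; rewrite -[X in measurable X]setTI; apply: mf. Qed.

Lemma mset_forall d (U : measurableType d) (K : nat) (A : 'I_K -> set U) :
  (forall j, measurable (A j)) -> measurable [set x | forall j, A j x].
Proof. by move=> mA; rewrite forall_bigsetI; apply: bigsetI_measurable. Qed.

Lemma mset_exists d (U : measurableType d) (K : nat) (A : 'I_K -> set U) :
  (forall j, measurable (A j)) -> measurable [set x | exists j, A j x].
Proof. by move=> mA; rewrite exists_bigsetU; apply: bigsetU_measurable. Qed.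

Lemma aux_ineq (R : realFieldType) (t a b d : R) :
  t * a <= t * (b + d) -> - t * b <= - t * a + t * d.
Proof. lra. Qed.

Section Main.
Variables (R : realType) (dO : measure_display) (Om : measurableType dO)
  (P : probability Om R) (dX : measure_display) (T : measurableType dX)
  (X : Om -> T) (S : Om -> bool) (K : nat) (Y : Om -> 'I_K)
  (p : 'I_K -> T -> bool -> R) (k0 : 'I_K).
Hypotheses (mX : measurable_fun setT X)
  (mS : forall s : bool, measurable [set w | S w = s])
  (mY : forall k : 'I_K, measurable [set w | Y w = k])
  (pi0 : forall s : bool, 0 < piS P S s)
  (cp : is_cond_prob P X S Y p)
  (cont : continuity_assumption P X S p).

Local Notation pis := (piS P S).

Definition Pr (A : set Om) : R := fine (P A).

Lemma PrE A : measurable A -> P A = (Pr A)%:E.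
Proof. by move=> mA; rewrite /Pr fineK// fin_num_measure. Qed.

Lemma Pr_ge0 A : 0 <= Pr A.
Proof. by rewrite /Pr fine_ge0. Qed.

Lemma Pr_le A B : measurable A -> measurable B -> A `<=` B -> Pr A <= Pr B.
Proof.
move=> mA mB AB; rewrite -lee_fin -!PrE//; apply: le_measure => //; rewrite inE//.
Qed.

Lemma PrT : Pr setT = 1.
Proof. by rewrite /Pr probability_setT. Qed.

Lemma Pr_le1 A : measurable A -> Pr A <= 1.
Proof. by move=> mA; rewrite -PrT; apply: Pr_le. Qed.

Lemma PrU A B : measurable A -> measurable B -> A `&` B = set0 ->
  Pr (A `|` B) = Pr A + Pr B.
Proof.
move=> mA mB AB; apply: EFin_inj; rewrite EFinD -!PrE ?measureU//; exact: measurableU.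
Qed.

Lemma PrU2 A B : measurable A -> measurable B -> Pr (A `|` B) <= Pr A + Pr B.
Proof.
by move=> mA mB; rewrite -lee_fin EFinD -!PrE //; [apply: measureU2|exact: measurableU].
Qed.

Lemma Pr_split A C : measurable A -> measurable C ->
  Pr A = Pr (A `&` C) + Pr (A `\` C).
Proof.
move=> mA mC; rewrite -PrU; [|exact: measurableI|exact: measurableD|].
  by rewrite setUIDK.
by rewrite setDE setIACA setICr setI0.
Qed.

Lemma Pr_bigU (I : eqType) (r : seq I) (F : I -> set Om) :
  (forall i, measurable (F i)) ->
  Pr (\big[setU/set0]_(i <- r) F i) <= \sum_(i <- r) Pr (F i).
Proof.
move=> mF; elim: r => [|a r IH]; first by rewrite !big_nil /Pr measure0.
rewrite !big_cons; apply: le_trans (PrU2 _ _) _ => //.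
  exact: bigsetU_measurable.
by rewrite lerD2l.
Qed.


Lemma bint (f : Om -> R) M : measurable_fun setT f -> (forall w, `|f w| <= M) ->
  forall D, measurable D -> P.-integrable D (EFin \o f).
Proof.
move=> mf fM D mD; apply: measurable_bounded_integrable => //.
- by rewrite -ge0_fin_numE// fin_num_measure.
- exact: measurable_funS mf.
rewrite /bounded_near; near=> N => w _ /=.
apply: le_trans (fM w) _; near: N; exact: nbhs_pinfty_ge (num_real _).
Unshelve. all: end_near. Qed.

Lemma Rint_cst D r : measurable D -> \int[P]_(x in D) r = r * Pr D.
Proof. by move=> mD; rewrite Rintegral_cst. Qed.

Lemma Rint_split (f : Om -> R) M A C : measurable_fun setT f -> (forall w, `|f w| <= M) ->
  measurable A -> measurable C ->
  \int[P]_(x in A) f x = \int[P]_(x in A `&` C) f x + \int[P]_(x in A `\` C) f x.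
Proof.
move=> mf fM mA mC; rewrite -Rintegral_setU; [|exact: measurableI|exact: measurableD| |].
- by rewrite setUIDK.
- apply: bint fM _ _ => //; apply: measurableU; [exact: measurableI|exact: measurableD].
- by apply/disj_set2P; rewrite setDE setIACA setICr setI0.
Qed.


Lemma p_ge0 k x s : 0 <= p k x s.
Proof. by case: cp => _ [H _]. Qed.

Lemma p_le1 k x s : p k x s <= 1.
Proof.
case: cp => _ [_ [H _]]; rewrite -(H x s) (bigD1 k)//= lerDl.
by apply: sumr_ge0 => i _; exact: p_ge0.
Qed.

Lemma mp k s : measurable_fun setT (fun x => p k x s).
Proof. by case: cp => H _; apply: H. Qed.

Definition sc (c : 'I_K -> R) (k : 'I_K) (x : T) (s : bool) : R :=
  pis s * p k x s - Defs.sval R s * c k.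

Definition msc c x s : R := \big[Order.max/sc c k0 x s]_(j < K) sc c j x s.

Lemma le_msc c x s j : sc c j x s <= msc c x s.
Proof. exact: (le_bigmax _ (fun j => sc c j x s)). Qed.

Lemma msc_le c x s m : (forall j, sc c j x s <= m) -> msc c x s <= m.
Proof. by move=> H; apply: bigmax_le => // j _; apply: H. Qed.

Lemma msc_ex c x s : exists j, msc c x s = sc c j x s.
Proof.
rewrite /msc; apply: (big_ind (fun v => exists j, v = sc c j x s)).
- by exists k0.
- move=> a b [i ->] [j ->]; rewrite /Order.max; case: ifP => _; by [exists j|exists i].
- by move=> j _; exists j.
Qed.

Definition Cb c x s (k : 'I_K) : bool :=
  [forall j : 'I_K, sc c j x s <= sc c k x s] && [forall j : 'I_K, (j < k)%N ==> (sc c j x s < sc c k x s)].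

Definition gm c x s : 'I_K := odflt k0 [pick k | Cb c x s k].

Lemma Cb_ex c x s : exists k, Cb c x s k.
Proof.
have [jm Hjm] := msc_ex c x s.
have Pjm : [forall j, sc c j x s <= sc c jm x s] by apply/forallP => j; rewrite -Hjm le_msc.
case: (@arg_minnP _ jm (fun i => [forall j, sc c j x s <= sc c i x s]) (fun i : 'I_K => (i : nat)) Pjm) => i Pi Hmin; exists i; rewrite /Cb Pi /=.
apply/forallP => j; apply/implyP => ji.
have := Hmin j; rewrite leqNgt ji /= => Hj.
have /forallP /(_ j) Pij := Pi.
rewrite lt_neqAle Pij andbT; apply/negP => /eqP Heq.
have : false; last by [].
apply: Hj; apply/forallP => l; move/forallP: Pi => /(_ l); by rewrite Heq.
Qed.

Lemma gmP c x s : Cb c x s (gm c x s).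
Proof.
rewrite /gm; case: pickP => //= H; have [k Hk] := Cb_ex c x s.
by move: (H k); rewrite Hk.
Qed.

Lemma Cb_uniq c x s k k' : Cb c x s k -> Cb c x s k' -> k = k'.
Proof.
move=> /andP[/forallP A1 /forallP B1] /andP[/forallP A2 /forallP B2].
apply/val_inj => /=; case: (ltngtP k k') => // H.
- by move: (B2 k); rewrite H /= => /(lt_le_trans) /(_ (A1 k')); rewrite ltxx.
- by move: (B1 k'); rewrite H /= => /(lt_le_trans) /(_ (A2 k)); rewrite ltxx.
Qed.

Lemma gm_eq c x s k : (gm c x s == k) = Cb c x s k.
Proof.
apply/eqP/idP => [<-|H]; first exact: gmP.
exact: Cb_uniq (gmP c x s) H.
Qed.

Lemma gm_max c x s j : sc c j x s <= sc c (gm c x s) x s.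
Proof. by have /andP[/forallP H _] := gmP c x s; apply: H. Qed.

Lemma sc_gm c x s : sc c (gm c x s) x s = msc c x s.
Proof.
apply/eqP; rewrite eq_le le_msc; apply: msc_le => j; exact: gm_max.
Qed.

Lemma msc_sc c x s : msc c x s = sc c (gm c x s) x s.
Proof. by rewrite sc_gm. Qed.


Lemma msc_seq_meas (a : T -> R) (F : 'I_K -> T -> R) (r : seq 'I_K) :
  measurable_fun setT a -> (forall j, measurable_fun setT (F j)) ->
  measurable_fun setT (fun x => \big[Order.max/a x]_(j <- r) F j x).
Proof.
move=> ma mF; elim: r => [|j r IH]; first by under eq_fun do rewrite big_nil.
under eq_fun do rewrite big_cons.
exact: measurable_realfun.measurable_maxr.
Qed.

Lemma msc_meas_T c k s : measurable_fun setT (fun x => sc c k x s).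
Proof.
apply: measurable_realfun.measurable_funB; last exact: measurable_cst.
apply: measurable_realfun.measurable_funM; [exact: measurable_cst|exact: mp].
Qed.

Lemma mscT c s : measurable_fun setT (fun x => msc c x s).
Proof. by apply: msc_seq_meas => [|j]; exact: msc_meas_T. Qed.

Lemma gm_set c s k : [set x | gm c x s = k] =
  [set x | forall j, sc c j x s <= sc c k x s] `&`
  [set x | forall j : 'I_K, [set x | (j < k)%N -> sc c j x s < sc c k x s] x].
Proof.
apply/seteqP; split => x /=.
- move/eqP; rewrite gm_eq => /andP[/forallP H1 /forallP H2]; split => // j.
  by move=> jk; have := H2 j; rewrite jk.
- move=> [H1 H2]; apply/eqP; rewrite gm_eq; apply/andP; split; apply/forallP => j //.
  by apply/implyP; apply: H2.
Qed.

Lemma gm_classifier c : classifier (gm c).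
Proof.
move=> s k; rewrite gm_set; apply: measurableI; apply: mset_forall => j.
- by apply: mset_bool; apply: measurable_realfun.measurable_fun_ler; exact: msc_meas_T.
- case: (ltnP j k) => jk.
  + rewrite (_ : [set _ | _] = [set x | sc c j x s < sc c k x s]).
      by apply: mset_bool; apply: measurable_realfun.measurable_fun_ltr; exact: msc_meas_T.
    by apply/seteqP; split => x /=; [apply|move=> H _].
  + rewrite (_ : [set _ | _] = [set: T]); first exact: measurableT.
    apply/seteqP; split => // x _ /= H; exfalso; move: H; by rewrite ltnNge jk.
Qed.

Definition Aset (g : T -> bool -> 'I_K) k s := [set w | g (X w) (S w) = k /\ S w = s].

Lemma mAset g k s : classifier g -> measurable (Aset g k s).
Proof.
move=> cg; have -> : Aset g k s = (X @^-1` [set x | g x s = k]) `&` [set w | S w = s].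
  by apply/seteqP; split => w /= [H1 H2]; split => //; move: H1; rewrite H2.
apply: measurableI => //; rewrite -[X in measurable X]setTI; exact: mX.
Qed.

Definition Bd (c : 'I_K -> R) s := pis s + \sum_j `|c j|.

Lemma sc_bd c k x s : `|sc c k x s| <= Bd c s.
Proof.
rewrite /sc /Bd; apply: (le_trans (ler_normB _ _)); apply: lerD.
  rewrite normrM (ger0_norm (ltW (pi0 s))) (ger0_norm (p_ge0 _ _ _)).
  rewrite -[X in _ <= X]mulr1; apply: ler_wpM2l; [exact: ltW|exact: p_le1].
rewrite normrM (_ : `|Defs.sval R s| = 1); last by case: s; rewrite /Defs.sval ?normrN normr1.
rewrite mul1r (bigD1 k)//= lerDl; apply: sumr_ge0 => *; exact: normr_ge0.
Qed.

Lemma msc_bd c x s : `|msc c x s| <= Bd c s.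
Proof. by rewrite msc_sc; exact: sc_bd. Qed.

Lemma scO c k s : measurable_fun setT (fun w => sc c k (X w) s).
Proof. exact: (measurableT_comp (msc_meas_T c k s) mX). Qed.

Lemma mscO c s : measurable_fun setT (fun w => msc c (X w) s).
Proof. exact: (measurableT_comp (mscT c s) mX). Qed.


Lemma Rint_partition (D : set Om) (F : 'I_K -> set Om) (f : Om -> R) M :
  measurable_fun setT f -> (forall w, `|f w| <= M) ->
  (forall k, measurable (F k)) -> (forall i j, i != j -> F i `&` F j = set0) ->
  D = \big[setU/set0]_(k <- index_enum 'I_K) F k ->
  \int[P]_(w in D) f w = \sum_k \int[P]_(w in F k) f w.
Proof.
move=> mf fM mF dF ->; rewrite {1}/Rintegral integral_bigsetU_EFin //.
- rewrite (_ : (\sum_(k <- _) _)%E = (\sum_k \int[P]_(w in F k) f w)%:E) //.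
  rewrite -sumEFin; apply: eq_bigr => k _.
  by rewrite /Rintegral fineK// integrable_fin_num// (bint mf fM).
- exact: index_enum_uniq.
- by apply/trivIsetP => i j _ _; apply: dF.
- by apply/measurable_realfun.measurable_EFinP; exact: measurable_funS mf.
Qed.

Lemma Pr_Rint D : measurable D -> Pr D = \int[P]_(w in D) 1.
Proof. by move=> mD; rewrite Rint_cst// mul1r. Qed.

Lemma Pr_partition (D : set Om) (F : 'I_K -> set Om) :
  measurable D ->
  (forall k, measurable (F k)) -> (forall i j, i != j -> F i `&` F j = set0) ->
  D = \big[setU/set0]_(k <- index_enum 'I_K) F k ->
  Pr D = \sum_k Pr (F k).
Proof.
move=> mD mF dF HD.
have h1 : forall w : Om, `|(fun=> (1:R)) w| <= 1 by move=> w; rewrite normr1.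
rewrite Pr_Rint// (@Rint_partition D F (fun=> 1) 1 (measurable_cst _) h1 mF dF HD).
by apply: eq_bigr => k _; rewrite Pr_Rint.
Qed.

Lemma Aset_disj g s i j : i != j -> Aset g i s `&` Aset g j s = set0.
Proof.
move=> ij; apply/seteqP; split => // w [[H1 _] [H2 _]].
by move: ij; rewrite -H1 -H2 eqxx.
Qed.

Lemma Aset_cover g s : [set w | S w = s] = \big[setU/set0]_(k <- index_enum 'I_K) Aset g k s.
Proof.
apply/seteqP; split => w /=.
  by move=> Sw; apply/in_bigsetU; exists (g (X w) (S w)); rewrite ?mem_index_enum.
by move/in_bigsetU => [k _ [_ H]].
Qed.

Lemma Rint_Aset g (f : Om -> R) M s : classifier g ->
  measurable_fun setT f -> (forall w, `|f w| <= M) ->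
  \int[P]_(w in [set w | S w = s]) f w = \sum_k \int[P]_(w in Aset g k s) f w.
Proof.
move=> cg mf fM; apply: Rint_partition mf fM _ _ (Aset_cover g s).
- by move=> k; exact: mAset.
- exact: Aset_disj.
Qed.

Definition Vset (g : T -> bool -> 'I_K) k s :=
  [set w | g (X w) (S w) = k /\ S w = s /\ Y w = k].

Lemma mVset g k s : classifier g -> measurable (Vset g k s).
Proof.
move=> cg; have -> : Vset g k s = Aset g k s `&` [set w | Y w = k].
  by apply/seteqP; split => w /=; [move=> [H1 [H2 H3]]|move=> [[H1 H2] H3]].
exact: measurableI (mAset _ _ cg) (mY k).
Qed.

Lemma V_cp g k s : classifier g ->
  Pr (Vset g k s) = \int[P]_(w in Aset g k s) p k (X w) s.
Proof.
move=> cg; case: cp => _ [_ [_ H]].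
have := H [set x | g x s = k] k s (cg s k).
have -> : [set w | [set x | g x s = k] (X w) /\ S w = s /\ Y w = k] = Vset g k s.
  apply/seteqP; split => w /= [H1 [H2 H3]]; (split; last by []); by [rewrite H2|rewrite -H2].
have -> : [set w | [set x | g x s = k] (X w) /\ S w = s] = Aset g k s.
  apply/seteqP; split => w /= [H1 H2]; (split; last by []); by [rewrite H2|rewrite -H2].
by rewrite /Pr /Rintegral => ->.
Qed.


Lemma risk_V g : classifier g ->
  risk P X S Y g = 1 - \sum_k (Pr (Vset g k true) + Pr (Vset g k false)).
Proof.
move=> cg.
pose F k := Vset g k true `|` Vset g k false.
have mF k : measurable (F k) by apply: measurableU; exact: mVset.
have Hc : [set w | g (X w) (S w) = Y w] = \big[setU/set0]_(k <- index_enum 'I_K) F k.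
  apply/seteqP; split => w /=.
    move=> H; apply/in_bigsetU; exists (Y w); rewrite ?mem_index_enum //.
    by rewrite /F /Vset /=; case E: (S w); [left|right]; rewrite -E.
  by move/in_bigsetU => [k _]; rewrite /F /Vset /= => -[[H1 [_ H3]]|[H1 [_ H3]]]; rewrite H1 H3.
have mG : measurable [set w | g (X w) (S w) = Y w].
  by rewrite Hc; apply: bigsetU_measurable => k _; exact: mF.
have -> : risk P X S Y g = 1 - Pr [set w | g (X w) (S w) = Y w].
  rewrite /risk -/(Pr _) -PrT (Pr_split measurableT mG) setTI.
  rewrite (_ : [set: Om] `\` _ = [set w | g (X w) (S w) <> Y w]); first by ring.
  by apply/seteqP; split => w /=; [move=> [_ H]|move=> H; split].
congr (_ - _); rewrite (Pr_partition mG mF _ Hc).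
  apply: eq_bigr => k _; rewrite PrU //; try exact: mVset.
  by apply/seteqP; split => // w /= [[_ [H1 _]] [_ [H2 _]]]; move: H1; rewrite H2.
move=> i j ij; apply/seteqP; split => // w /= [Hi Hj].
by move: ij; case: Hi => -[H1 [_ H3]]; case: Hj => -[H1' [_ H3']]; rewrite -H3 -H3' eqxx.
Qed.


Lemma sum_gen1 (F G H : 'I_K -> R) :
  1 - \sum_k F k + \sum_k G k + \sum_k H k = 1 + \sum_k (- F k + G k + H k).
Proof. by rewrite !big_split /= sumrN; ring. Qed.

Lemma sum_gen2 (U V W : 'I_K -> R) (a b e : R) :
  1 - ((\sum_k U k) / a + (\sum_k V k) / b) - e * \sum_k W k =
  1 + \sum_k (- (U k / a) - V k / b - e * W k).
Proof. by rewrite !big_split /= !sumrN -!mulr_suml -mulr_sumr; ring. Qed.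

Definition Jv g c s := \sum_k \int[P]_(w in Aset g k s) sc c k (X w) s.

Lemma Rint_sc g c k s : classifier g ->
  \int[P]_(w in Aset g k s) sc c k (X w) s =
  pis s * Pr (Vset g k s) - Defs.sval R s * c k * Pr (Aset g k s).
Proof.
move=> cg; have mA := mAset k s cg.
have ip : P.-integrable (Aset g k s) (EFin \o (fun w => p k (X w) s)).
  apply: (@bint _ 1) => // [|w]; first exact: (measurableT_comp (mp k s) mX).
  by rewrite ger0_norm ?p_le1 ?p_ge0.
rewrite /sc RintegralB //.
- by rewrite RintegralZl // -V_cp // Rint_cst.
- by apply: (eq_integrable mA _ _ _ (integrableZl mA (pis s) ip)) => w _.
- exact: finite_measure_integrable_cst.
Qed.

Lemma fair_risk_J g (l1 l2 : 'I_K -> R) eps : classifier g ->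
  fair_risk P X S Y eps l1 l2 g =
  1 - (Jv g (fun k => l1 k - l2 k) true / pis true +
       Jv g (fun k => l1 k - l2 k) false / pis false)
    - eps * \sum_k (l1 k + l2 k).
Proof.
move=> cg.
have HJ s : Jv g (fun k => l1 k - l2 k) s = \sum_k (pis s * Pr (Vset g k s) -
   Defs.sval R s * (l1 k - l2 k) * Pr (Aset g k s)).
  by apply: eq_bigr => k _; exact: Rint_sc.
rewrite /fair_risk risk_V // !HJ.
rewrite sum_gen1 sum_gen2; congr (_ + _); apply: eq_bigr => k _.
rewrite /Dk /cond_pred /Defs.sval -!/(Pr _).
have := pi0 true; have := pi0 false.
rewrite -!/(pis _) => h1 h2.
field; apply/andP; split; exact: lt0r_neq0.
Qed.


Definition Mv c s := \int[P]_(w in [set w | S w = s]) msc c (X w) s.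

Lemma bigmaxe_msc c x s :
  (\big[maxe/-oo%E]_(k < K) (sc c k x s)%:E)%E = (msc c x s)%:E.
Proof.
apply/eqP; rewrite eq_le; apply/andP; split.
- by apply: bigmax_le => [|k _]; rewrite ?leNye // lee_fin le_msc.
- by rewrite msc_sc; exact: (le_bigmax _ (fun k => (sc c k x s)%:E)).
Qed.

Lemma Hdual_M eps (l1 l2 : 'I_K -> R) :
  Hdual P X S eps p l1 l2 =
  Mv (fun k => l1 k - l2 k) true / pis true + Mv (fun k => l1 k - l2 k) false / pis false
  + eps * \sum_k (l1 k + l2 k).
Proof.
rewrite /Hdual /cond_exp_max /Mv /Rintegral.
by congr (_ / _ + _ / _ + _); congr fine; apply: eq_integral => w _; rewrite bigmaxe_msc.
Qed.

Lemma J_le_M g c s : classifier g -> Jv g c s <= Mv c s.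
Proof.
move=> cg; rewrite /Mv (@Rint_Aset g _ (Bd c s) s cg (mscO c s) (fun w => msc_bd c (X w) s)).
apply: ler_sum => k _; apply: le_Rintegral.
- exact: mAset.
- apply: (bint (scO c k s) (fun w => sc_bd c k (X w) s)); exact: mAset.
- apply: (bint (mscO c s) (fun w => msc_bd c (X w) s)); exact: mAset.
- by move=> w _; exact: le_msc.
Qed.

Lemma J_gm c s : Jv (gm c) c s = Mv c s.
Proof.
rewrite /Mv (@Rint_Aset (gm c) _ (Bd c s) s (gm_classifier c) (mscO c s) (fun w => msc_bd c (X w) s)).
apply: eq_bigr => k _; apply: eq_Rintegral => w; rewrite inE /Aset /= => -[H1 H2].
by rewrite msc_sc; move: H1; rewrite H2 => ->.
Qed.

Lemma fair_risk_lb g (l1 l2 : 'I_K -> R) eps : classifier g ->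
  1 - Hdual P X S eps p l1 l2 <= fair_risk P X S Y eps l1 l2 g.
Proof.
move=> cg; rewrite fair_risk_J // Hdual_M.
have h s : Jv g (fun k => l1 k - l2 k) s / pis s <= Mv (fun k => l1 k - l2 k) s / pis s.
  by rewrite ler_pM2r ?invr_gt0 //; exact: J_le_M.
have := h true; have := h false; lra.
Qed.

Lemma fair_risk_gm (l1 l2 : 'I_K -> R) eps :
  fair_risk P X S Y eps l1 l2 (gm (fun k => l1 k - l2 k)) = 1 - Hdual P X S eps p l1 l2.
Proof.
rewrite fair_risk_J; last exact: gm_classifier.
rewrite Hdual_M !J_gm; ring.
Qed.


Definition Tie c s a b t := [set w | S w = s /\ a != b /\
  sc c a (X w) s - t < sc c b (X w) s /\ sc c b (X w) s <= sc c a (X w) s].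

Lemma mTie c s a b t : measurable (Tie c s a b t).
Proof.
have [ab|nab] := eqVneq a b.
  rewrite (_ : Tie c s a b t = set0) //; apply/seteqP; split => // w.
  by rewrite /Tie /= ab eqxx => -[_ []].
have -> : Tie c s a b t = [set w | S w = s] `&`
   ([set w | sc c a (X w) s - t < sc c b (X w) s] `&` [set w | sc c b (X w) s <= sc c a (X w) s]).
  by apply/seteqP; split => w /=; [move=> [? [_ [? ?]]]|move=> [? [? ?]]].
apply: measurableI => //; apply: measurableI; apply: mset_bool.
- apply: measurable_realfun.measurable_fun_ltr; last exact: scO.
  by apply: measurable_realfun.measurable_funB; [exact: scO|exact: measurable_cst].
- by apply: measurable_realfun.measurable_fun_ler; exact: scO.
Qed.

Definition Cs a b s y := [set w | p b (X w) (S w) - p a (X w) (S w) <= y /\ S w = s].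

Lemma mCs a b s y : measurable (Cs a b s y).
Proof.
have -> : Cs a b s y = [set w | p b (X w) s - p a (X w) s <= y] `&` [set w | S w = s].
  by apply/seteqP; split => w /= [H1 H2]; split => //; move: H1; rewrite H2.
apply: measurableI => //; apply: mset_bool; apply: measurable_realfun.measurable_fun_ler.
  apply: measurable_realfun.measurable_funB; exact: (measurableT_comp (mp _ s) mX).
exact: measurable_cst.
Qed.

Lemma tie_near c s a b eta : 0 < eta -> \forall t \near 0^'+, Pr (Tie c s a b t) <= eta.
Proof.
move=> eta0.
have [ab|nab] := eqVneq a b.
  near=> t; rewrite (_ : Tie c s a b t = set0); first by rewrite /Pr measure0 /= ltW.
  by apply/seteqP; split => // w; rewrite /Tie /= ab eqxx => -[_ []].
have pi0s := pi0 s.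
pose z := Defs.sval R s * (c b - c a) / pis s.
have ba : b <> a by move=> E; move: nab; rewrite E eqxx.
have := @cont b a s ba z.
move/cvgrPdist_lt => /(_ (eta / pis s) (divr_gt0 eta0 pi0s)) /nbhs_ballP [e /= e0 He].
near=> t.
have t0 : 0 < t by near: t; exact: nbhs_right_gt.
have te : t < e * pis s by near: t; apply: nbhs_right_lt; rewrite mulr_gt0.
have Hb := He (z - t / pis s).
have {Hb}Hb : `|(fine (P (Cs a b s z)) / pis s) - (fine (P (Cs a b s (z - t / pis s))) / pis s)| < eta / pis s.
  apply: Hb; rewrite -ball_normE /ball_ /= opprB addrC subrK ger0_norm ?divr_ge0 ?ltW //.
  by rewrite ltr_pdivrMr.
have sub1 : Cs a b s z `&` Cs a b s (z - t / pis s) = Cs a b s (z - t / pis s).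
  apply/seteqP; split => w /=; first by move=> [].
  move=> [H1 H2]; split => //; split => //; apply: le_trans H1 _.
  by rewrite gerBl divr_ge0 ?ltW.
have sub2 : Tie c s a b t `<=` Cs a b s z `\` Cs a b s (z - t / pis s).
  move=> w [Sw [_ [H1 H2]]]; rewrite /Cs /= Sw; split.
    split => //; rewrite /z ler_pdivlMr //; move: H2; rewrite /sc; lra.
  move=> [H3 _]; move: H3; rewrite /z -mulrBl ler_pdivlMr //.
  move: H1; rewrite /sc; lra.
apply: le_trans (Pr_le (mTie _ _ _ _ _) _ sub2) _.
  by apply: measurableD; exact: mCs.
have := Pr_split (mCs a b s z) (mCs a b s (z - t / pis s)); rewrite sub1 => Hs.
have -> : Pr (Cs a b s z `\` Cs a b s (z - t / pis s)) =
   pis s * (Pr (Cs a b s z) / pis s - Pr (Cs a b s (z - t / pis s)) / pis s).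
  by rewrite Hs; field; exact: lt0r_neq0.
rewrite -(@ler_pM2l _ (pis s)^-1) ?invr_gt0 // mulrA mulVf ?lt0r_neq0 // mul1r.
rewrite [X in _ <= X]mulrC; apply: (le_trans (ler_norm _)); apply: ltW; exact: Hb.
Unshelve. all: end_near. Qed.


Lemma Rint_bound_split (h : Om -> R) M A C (a b : R) :
  measurable_fun setT h -> (forall w, `|h w| <= M) -> measurable A -> measurable C ->
  (forall w, A w -> C w -> h w <= a) -> (forall w, A w -> ~ C w -> h w <= b) ->
  \int[P]_(w in A) h w <= a * Pr (A `&` C) + b * Pr (A `\` C).
Proof.
move=> mh hM mA mC H1 H2.
have mAC : measurable (A `&` C) by exact: measurableI.
have mAD : measurable (A `\` C) by exact: measurableD.
rewrite (Rint_split mh hM mA mC) -!Rint_cst //; apply: lerD; apply: le_Rintegral => //.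
- exact: (bint mh hM).
- exact: finite_measure_integrable_cst.
- by move=> w [? ?]; apply: H1.
- exact: (bint mh hM).
- exact: finite_measure_integrable_cst.
- by move=> w [? ?]; apply: H2.
Qed.

Lemma hdiff_meas c c' s : measurable_fun setT (fun w => msc c' (X w) s - msc c (X w) s).
Proof. by apply: measurable_realfun.measurable_funB; exact: mscO. Qed.

Lemma hdiff_bd c c' s w : `|msc c' (X w) s - msc c (X w) s| <= Bd c' s + Bd c s.
Proof. by apply: (le_trans (ler_normB _ _)); apply: lerD; exact: msc_bd. Qed.

Lemma Mv_diff c c' s : Mv c' s - Mv c s =
  \int[P]_(w in [set w | S w = s]) (msc c' (X w) s - msc c (X w) s).
Proof.
rewrite /Mv RintegralB //.
- exact: (bint (mscO c' s) (fun w => msc_bd c' (X w) s)).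
- exact: (bint (mscO c s) (fun w => msc_bd c (X w) s)).
Qed.

Lemma up_bound c c' k s t : 0 < t ->
  (forall x, sc c' k x s = sc c k x s + t) ->
  (forall j x, j != k -> sc c' j x s = sc c j x s) ->
  Mv c' s - Mv c s <= t * Pr (Aset (gm c) k s) + t * \sum_j Pr (Tie c s j k t).
Proof.
move=> t0 Hk Hj.
pose Cup := [set w | msc c (X w) s < sc c k (X w) s + t].
have mCup : measurable Cup.
  apply: mset_bool; apply: measurable_realfun.measurable_fun_ltr; first exact: mscO.
  by apply: measurable_realfun.measurable_funD; [exact: scO|exact: measurable_cst].
have le1 x : msc c' x s <= msc c x s + t.
  apply: msc_le => j; have [->|jk] := eqVneq j k.
    by rewrite Hk lerD2r le_msc.
  by rewrite Hj // (le_trans (le_msc c x s j)) // lerDl ltW.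
have le2 x : sc c k x s + t <= msc c x s -> msc c' x s <= msc c x s.
  move=> H; apply: msc_le => j; have [->|jk] := eqVneq j k; first by rewrite Hk.
  by rewrite Hj // le_msc.
rewrite Mv_diff.
apply: (le_trans (Rint_bound_split (a := t) (b := 0) (hdiff_meas c c' s) (hdiff_bd c c' s) (mS s) mCup _ _)).
- by move=> w _ _; have := le1 (X w); lra.
- by move=> w _ /negP; rewrite -leNgt => /le2; lra.
rewrite mul0r addr0 -mulrDr; apply: ler_wpM2l; first exact: ltW.
have mA := mAset k s (gm_classifier c).
have mB : measurable (\big[setU/set0]_(j <- index_enum 'I_K) Tie c s j k t).
  by apply: bigsetU_measurable => j _; exact: mTie.
have sub : [set w | S w = s] `&` Cup `<=` Aset (gm c) k s `|` \big[setU/set0]_(j <- index_enum 'I_K) Tie c s j k t.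
  move=> w [Sw Hw]; have [E|jk] := eqVneq (gm c (X w) s) k.
    by left; split => //; rewrite Sw.
  right; apply/in_bigsetU; exists (gm c (X w) s); first exact: mem_index_enum.
  split => //; split => //; rewrite sc_gm; split => //.
    by move: Hw; rewrite /Cup /=; lra.
  exact: le_msc.
apply: (le_trans (Pr_le (measurableI _ _ (mS s) mCup) (measurableU _ _ mA mB) sub)).
apply: (le_trans (PrU2 mA mB)); rewrite lerD2l.
by apply: Pr_bigU => j; exact: mTie.
Qed.


Lemma down_bound c c' k s t : 0 < t ->
  (forall x, sc c' k x s = sc c k x s - t) ->
  (forall j x, j != k -> sc c' j x s = sc c j x s) ->
  Mv c' s - Mv c s <= - t * Pr (Aset (gm c) k s) + t * \sum_j Pr (Tie c s k j t).
Proof.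
move=> t0 Hk Hj.
pose Cdn := [set w | forall j : 'I_K, [set w | j != k -> sc c j (X w) s <= sc c k (X w) s - t] w].
have mCdn : measurable Cdn.
  apply: mset_forall => j; have [->|jk] := eqVneq j k.
    rewrite (_ : [set _ | _] = [set: Om]); first exact: measurableT.
    by apply/seteqP; split => // w _ /=; rewrite eqxx.
  rewrite (_ : [set _ | _] = [set w | sc c j (X w) s <= sc c k (X w) s - t]).
    apply: mset_bool; apply: measurable_realfun.measurable_fun_ler; first exact: scO.
    by apply: measurable_realfun.measurable_funB; [exact: scO|exact: measurable_cst].
  by apply/seteqP; split => w /=; [apply|move=> H _].
have le1 x : msc c' x s <= msc c x s.
  apply: msc_le => j; have [->|jk] := eqVneq j k.
    by rewrite Hk (le_trans _ (le_msc c x s k)) // gerBl ltW.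
  by rewrite Hj // le_msc.
have le2 w : Cdn w -> msc c' (X w) s <= msc c (X w) s - t.
  move=> H; apply: msc_le => j; have [->|jk] := eqVneq j k.
    by rewrite Hk lerD2r le_msc.
  by rewrite Hj // (le_trans (H j jk)) // lerD2r le_msc.
rewrite Mv_diff.
apply: (le_trans (Rint_bound_split (a := - t) (b := 0) (hdiff_meas c c' s) (hdiff_bd c c' s) (mS s) mCdn _ _)).
- by move=> w _ /le2; lra.
- by move=> w _ _; have := le1 (X w); lra.
rewrite mul0r addr0.
have mA := mAset k s (gm_classifier c).
have mB : measurable (\big[setU/set0]_(j <- index_enum 'I_K) Tie c s k j t).
  by apply: bigsetU_measurable => j _; exact: mTie.
have mEC : measurable ([set w | S w = s] `&` Cdn) by exact: measurableI.
have sub : Aset (gm c) k s `<=` ([set w | S w = s] `&` Cdn) `|` \big[setU/set0]_(j <- index_enum 'I_K) Tie c s k j t.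
  move=> w [Hg Sw]; rewrite Sw in Hg.
  have [HC|HC] := pselect (Cdn w); first by left.
  right; apply/in_bigsetU.
  have [j Hj'] : exists j : 'I_K, ~ (j != k -> sc c j (X w) s <= sc c k (X w) s - t).
    by apply: contrapT => H; apply: HC => j; apply: contrapT => Hn; apply: H; exists j.
  exists j; first exact: mem_index_enum.
  have jk : j != k by apply/negP => /eqP E; apply: Hj'; rewrite E eqxx.
  split => //; split; first by rewrite eq_sym.
  have hm : sc c j (X w) s <= sc c k (X w) s by rewrite -Hg; exact: gm_max.
  split => //; apply: contrapT => Hn; apply: Hj' => _. by rewrite leNgt; apply/negP.
have := Pr_le mA (measurableU _ _ mEC mB) sub.
have := PrU2 mEC mB.
have : Pr (\big[setU/set0]_(j <- index_enum 'I_K) Tie c s k j t) <= \sum_j Pr (Tie c s k j t).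
  by apply: Pr_bigU => j; exact: mTie.
move=> h1 h2 h3.
have key : Pr (Aset (gm c) k s) <= Pr ([set w | S w = s] `&` Cdn) + \sum_j Pr (Tie c s k j t).
  by apply: (le_trans h3); apply: (le_trans h2); rewrite lerD2l.
have : t * Pr (Aset (gm c) k s) <= t * (Pr ([set w | S w = s] `&` Cdn) + \sum_j Pr (Tie c s k j t)).
  by apply: ler_wpM2l => //; exact: ltW.
exact: aux_ineq.
Qed.


Definition upd (f : 'I_K -> R) k (d : R) := fun j => f j + (if j == k then d else 0).

Definition TieS c s k t := \sum_j (Pr (Tie c s j k t) + Pr (Tie c s k j t)).

Lemma pert_s c k s (sg t : R) : (sg = 1 \/ sg = -1) -> 0 < t ->
  Mv (upd c k (sg * t)) s - Mv c s <=
  - (Defs.sval R s * sg) * t * Pr (Aset (gm c) k s) + t * TieS c s k t.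
Proof.
move=> hsg t0.
have Hj j x : j != k -> sc (upd c k (sg * t)) j x s = sc c j x s.
  by move=> jk; rewrite /sc /upd (negbTE jk) addr0.
have Hk x : sc (upd c k (sg * t)) k x s = sc c k x s - Defs.sval R s * sg * t.
  by rewrite /sc /upd eqxx; ring.
have Tge1 : \sum_j Pr (Tie c s j k t) <= TieS c s k t.
  by apply: ler_sum => j _; rewrite lerDl; exact: Pr_ge0.
have Tge2 : \sum_j Pr (Tie c s k j t) <= TieS c s k t.
  by apply: ler_sum => j _; rewrite lerDr; exact: Pr_ge0.
have t0' : 0 <= t by exact: ltW.
have [u1|u1] : Defs.sval R s * sg = 1 \/ Defs.sval R s * sg = -1.
  by case: (s); case: hsg => ->; rewrite /Defs.sval; [left|right|right|left]; ring.
- have := @down_bound c (upd c k (sg * t)) k s t t0.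
  move=> /(_ _ (fun j x jk => Hj j x jk)) H.
  rewrite u1; apply: (le_trans (H _)); first by move=> x; rewrite Hk u1 mul1r.
  by rewrite mulN1r lerD2l ler_wpM2l.
- have := @up_bound c (upd c k (sg * t)) k s t t0.
  move=> /(_ _ (fun j x jk => Hj j x jk)) H.
  rewrite u1 opprK mul1r; apply: (le_trans (H _)); first by move=> x; rewrite Hk u1 mulN1r opprK.
  by rewrite lerD2l ler_wpM2l.
Qed.

Definition Gv c := Mv c true / pis true + Mv c false / pis false.

Lemma ge0_eps (x C : R) : 0 <= C -> (forall e, 0 < e -> 0 <= x + C * e) -> 0 <= x.
Proof.
move=> C0 H; rewrite leNgt; apply/negP => x0.
have C1 : 0 < C + 1 by rewrite ltr_wpDl.
have e0 : 0 < - x / (C + 1) by rewrite divr_gt0 // oppr_gt0.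
have : C * (- x / (C + 1)) < - x.
  rewrite mulrA ltr_pdivrMr // mulrDr mulr1 mulrC ltrDl oppr_gt0 //.
have := H _ e0; lra.
Qed.


Definition Cc := 2 * K%:R * ((pis true)^-1 + (pis false)^-1).

Lemma Cc_ge0 : 0 <= Cc.
Proof. by rewrite /Cc mulr_ge0 // addr_ge0 // invr_ge0 ltW. Qed.

Lemma TieS_bd c s k t eta :
  (forall j, Pr (Tie c s j k t) <= eta /\ Pr (Tie c s k j t) <= eta) ->
  TieS c s k t <= 2 * K%:R * eta.
Proof.
move=> H; apply: (@le_trans _ _ (\sum_(j < K) (eta + eta))).
  by apply: ler_sum => j _; case: (H j) => ? ?; apply: lerD.
by rewrite sumr_const card_ord -mulr_natr; lra.
Qed.

Lemma G_deriv c k sg eta : (sg = 1 \/ sg = -1) -> 0 < eta ->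
  \forall t \near 0^'+,
    Gv (upd c k (sg * t)) - Gv c <= t * (- sg * Dk P X S (gm c) k + Cc * eta).
Proof.
move=> hsg eta0.
have HT : \forall t \near 0^'+, forall j,
   (Pr (Tie c true j k t) <= eta /\ Pr (Tie c true k j t) <= eta) /\
   (Pr (Tie c false j k t) <= eta /\ Pr (Tie c false k j t) <= eta).
  apply: filter_forall => j; near=> t; (split; split); near: t; exact: tie_near.
near=> t.
have t0 : 0 < t by near: t; exact: nbhs_right_gt.
have Hall : forall j, (Pr (Tie c true j k t) <= eta /\ Pr (Tie c true k j t) <= eta) /\
   (Pr (Tie c false j k t) <= eta /\ Pr (Tie c false k j t) <= eta) by near: t; exact: HT.
have bT := @TieS_bd c true k t eta (fun j => (Hall j).1).
have bF := @TieS_bd c false k t eta (fun j => (Hall j).2).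
have pT := pi0 true; have pF := pi0 false.
have h1 := @pert_s c k true sg t hsg t0.
have h2 := @pert_s c k false sg t hsg t0.
rewrite /Defs.sval in h1 h2.
move: h1 h2 bT bF.
rewrite /Gv /Dk /cond_pred /Cc -!/(Pr _).
set MT' := Mv _ true; set MF' := Mv _ false; set MT := Mv c true; set MF := Mv c false.
set QT := Pr (Aset _ k true); set QF := Pr (Aset _ k false).
set TT := TieS c true k t; set TF := TieS c false k t.
move=> h1 h2 bT bF.
have iT : 0 < (pis true)^-1 by rewrite invr_gt0.
have iF : 0 < (pis false)^-1 by rewrite invr_gt0.
have h1' : (MT' - MT) * (pis true)^-1 <= (- (1 * sg) * t * QT + t * TT) * (pis true)^-1.
  by rewrite ler_pM2r.
have h2' : (MF' - MF) * (pis false)^-1 <= (- (-1 * sg) * t * QF + t * TF) * (pis false)^-1.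
  by rewrite ler_pM2r.
have bT' : t * TT * (pis true)^-1 <= t * (2 * K%:R * eta) * (pis true)^-1.
  by rewrite ler_pM2r // ler_pM2l.
have bF' : t * TF * (pis false)^-1 <= t * (2 * K%:R * eta) * (pis false)^-1.
  by rewrite ler_pM2r // ler_pM2l.
move: h1' h2' bT' bF'; rewrite /QT /QF /Aset.
move: (Pr _) (Pr _) => qT qF.
lra.
Unshelve. all: end_near. Qed.


Lemma foc_dir (l1 l2 : 'I_K -> R) eps k (a1 a2 rho : R) :
  ((a1 = 1 /\ a2 = 0) \/ (a1 = 0 /\ a2 = 1) \/ (a1 = -1 /\ a2 = 0) \/ (a1 = 0 /\ a2 = -1)) ->
  0 < rho ->
  (forall t, 0 < t -> t <= rho ->
     Hdual P X S eps p l1 l2 <= Hdual P X S eps p (upd l1 k (a1 * t)) (upd l2 k (a2 * t))) ->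
  0 <= - (a1 - a2) * Dk P X S (gm (fun j => l1 j - l2 j)) k + eps * (a1 + a2).
Proof.
move=> ha rho0 Hmin.
pose c := fun j => l1 j - l2 j.
have hsg : a1 - a2 = 1 \/ a1 - a2 = -1.
  by case: ha => [[-> ->]|[[-> ->]|[[-> ->]|[-> ->]]]]; [left|right|right|left]; ring.
apply: (ge0_eps Cc_ge0) => eta eta0.
have H := G_deriv c k hsg eta0.
have [t [[t0 trho] Ht]] : exists t, (0 < t /\ t <= rho) /\
    Gv (upd c k ((a1 - a2) * t)) - Gv c <= t * (- (a1 - a2) * Dk P X S (gm c) k + Cc * eta).
  apply: (@filter_ex _ _ (at_right_proper_filter (0:R))); near=> t; split; [split|].
  - by near: t; exact: nbhs_right_gt.
  - by near: t; exact: nbhs_right_le.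
  - by near: t; exact: H.
have Hd := Hmin t t0 trho.
rewrite !Hdual_M in Hd.
have ceq : (fun j => upd l1 k (a1 * t) j - upd l2 k (a2 * t) j) = upd c k ((a1 - a2) * t).
  by apply/funext => j; rewrite /upd /c; case: (j == k); ring.
have sumeq : \sum_j (upd l1 k (a1 * t) j + upd l2 k (a2 * t) j) = \sum_j (l1 j + l2 j) + (a1 + a2) * t.
  rewrite (eq_bigr (fun j => (l1 j + l2 j) + (if j == k then (a1 + a2) * t else 0))).
    by rewrite big_split /= -big_mkcond big_pred1_eq.
  by move=> j _; rewrite /upd; case: (j == k); ring.
rewrite ceq sumeq -/c -/(Gv c) -/(Gv (upd c k ((a1 - a2) * t))) in Hd.
have : 0 <= t * (- (a1 - a2) * Dk P X S (gm c) k + eps * (a1 + a2) + Cc * eta).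
  move: Hd Ht; move: (Gv _) (Gv c) (Dk _ _ _ _ _) => g1 g0 d; lra.
by rewrite pmulr_rge0.
Unshelve. all: end_near. Qed.


Lemma kkt (l1 l2 : 'I_K -> R) eps :
  (forall k, 0 <= l1 k) -> (forall k, 0 <= l2 k) ->
  (forall m1 m2 : 'I_K -> R, (forall k, 0 <= m1 k) -> (forall k, 0 <= m2 k) ->
     Hdual P X S eps p l1 l2 <= Hdual P X S eps p m1 m2) ->
  forall k, let D := Dk P X S (gm (fun j => l1 j - l2 j)) k in
  `|D| <= eps /\ l1 k * (D - eps) = 0 /\ l2 k * (- D - eps) = 0.
Proof.
move=> l10 l20 Hmin k D.
have adm (f : 'I_K -> R) a : (forall j, 0 <= f j) -> 0 <= f k + a -> forall j, 0 <= upd f k a j.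
  move=> f0 fk j; rewrite /upd; case: eqP => [->//|_]; rewrite addr0; exact: f0.
have h1 : 0 <= - D + eps.
  have := @foc_dir l1 l2 eps k 1 0 1 (or_introl (conj erefl erefl)) ltr01.
  rewrite subr0 addr0 mulr1 mulN1r; apply => t t0 _; apply: Hmin; last first.
    by move=> j; rewrite /upd; case: eqP => _; rewrite ?mul0r addr0.
  by apply: adm => //; rewrite mul1r addr_ge0 // ltW.
have h2 : 0 <= D + eps.
  have := @foc_dir l1 l2 eps k 0 1 1 (or_intror (or_introl (conj erefl erefl))) ltr01.
  rewrite sub0r opprK mul1r add0r mulr1; apply => t t0 _; apply: Hmin.
    by move=> j; rewrite /upd; case: eqP => _; rewrite ?mul0r addr0.
  by apply: adm => //; rewrite mul1r addr_ge0 // ltW.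
have h3 : 0 < l1 k -> 0 <= D - eps.
  move=> lk; have := @foc_dir l1 l2 eps k (-1) 0 (l1 k) (or_intror (or_intror (or_introl (conj erefl erefl)))) lk.
  rewrite subr0 opprK mul1r addr0 mulrN1; apply => t t0 tl; apply: Hmin; last first.
    by move=> j; rewrite /upd; case: eqP => _; rewrite ?mul0r addr0.
  by apply: adm => //; rewrite mulN1r subr_ge0.
have h4 : 0 < l2 k -> 0 <= - D - eps.
  move=> lk; have := @foc_dir l1 l2 eps k 0 (-1) (l2 k) (or_intror (or_intror (or_intror (conj erefl erefl)))) lk.
  rewrite sub0r opprK mulN1r add0r mulrN1; apply => t t0 tl; apply: Hmin.
    by move=> j; rewrite /upd; case: eqP => _; rewrite ?mul0r addr0.
  by apply: adm => //; rewrite mulN1r subr_ge0.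
split; first by rewrite ler_norml; apply/andP; split; lra.
split.
- have [lk|] := ltrP 0 (l1 k); last first.
    move=> lk; have -> : l1 k = 0 by apply/eqP; rewrite eq_le lk l10.
    by rewrite mul0r.
  have := h3 lk; move=> h; have -> : D - eps = 0 by lra. by rewrite mulr0.
- have [lk|] := ltrP 0 (l2 k); last first.
    move=> lk; have -> : l2 k = 0 by apply/eqP; rewrite eq_le lk l20.
    by rewrite mul0r.
  have := h4 lk; move=> h; have -> : - D - eps = 0 by lra. by rewrite mulr0.
Qed.


Lemma Rint_bound_split_ge (h : Om -> R) M A C (a b : R) :
  measurable_fun setT h -> (forall w, `|h w| <= M) -> measurable A -> measurable C ->
  (forall w, A w -> C w -> a <= h w) -> (forall w, A w -> ~ C w -> b <= h w) ->
  a * Pr (A `&` C) + b * Pr (A `\` C) <= \int[P]_(w in A) h w.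
Proof.
move=> mh hM mA mC H1 H2.
have mAC : measurable (A `&` C) by exact: measurableI.
have mAD : measurable (A `\` C) by exact: measurableD.
rewrite (Rint_split mh hM mA mC) -!Rint_cst //; apply: lerD; apply: le_Rintegral => //.
- exact: finite_measure_integrable_cst.
- exact: (bint mh hM).
- by move=> w [? ?]; apply: H1.
- exact: finite_measure_integrable_cst.
- exact: (bint mh hM).
- by move=> w [? ?]; apply: H2.
Qed.

Lemma sum_le_eq (F G : 'I_K -> R) : (forall k, F k <= G k) ->
  \sum_k F k = \sum_k G k -> forall k, F k = G k.
Proof.
move=> FG Hs k; apply/eqP; rewrite eq_sym -subr_eq0; apply/eqP.
have H0 : \sum_k (G k - F k) = 0 by rewrite sumrB Hs subrr.
by apply: (psumr_eq0P _ H0) => // i _; rewrite subr_ge0.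
Qed.

Lemma Aset_eq gs c s : classifier gs -> Jv gs c s = Mv c s ->
  forall k, Pr (Aset gs k s) = Pr (Aset (gm c) k s).
Proof.
move=> cg HJ.
pose h k w := msc c (X w) s - sc c k (X w) s.
have mh k : measurable_fun setT (h k).
  by apply: measurable_realfun.measurable_funB; [exact: mscO|exact: scO].
have hb k w : `|h k w| <= Bd c s + Bd c s.
  by apply: (le_trans (ler_normB _ _)); apply: lerD; [exact: msc_bd|exact: sc_bd].
have h0 k w : 0 <= h k w by rewrite subr_ge0 le_msc.
have Hz : forall k, \int[P]_(w in Aset gs k s) h k w = 0.
  have HS : \sum_k \int[P]_(w in Aset gs k s) h k w = 0.
    rewrite (eq_bigr (fun k => \int[P]_(w in Aset gs k s) msc c (X w) s -
                            \int[P]_(w in Aset gs k s) sc c k (X w) s)).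
      rewrite sumrB -/(Jv gs c s) HJ /Mv.
      by rewrite (@Rint_Aset gs _ (Bd c s) s cg (mscO c s) (fun w => msc_bd c (X w) s)) subrr.
    move=> k _; rewrite RintegralB //; first exact: mAset.
    - exact: (bint (mscO c s) (fun w => msc_bd c (X w) s) (mAset k s cg)).
    - exact: (bint (scO c k s) (fun w => sc_bd c k (X w) s) (mAset k s cg)).
  move=> k; apply: (psumr_eq0P _ HS) => // i _; apply: Rintegral_ge0 => w _; exact: h0.
have Hle : forall k, Pr (Aset gs k s) <= Pr (Aset (gm c) k s).
  move=> k; rewrite -subr_ge0; apply: (@ge0_eps _ K%:R) => // eta eta0.
  have HT : \forall t \near 0^'+, forall j, Pr (Tie c s j k t) <= eta.
    by apply: filter_forall => j; exact: tie_near.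
  have [d [d0 Hd]] : exists d, 0 < d /\ forall j, Pr (Tie c s j k d) <= eta.
    apply: (@filter_ex _ _ (at_right_proper_filter (0:R))); near=> d; split.
    - by near: d; exact: nbhs_right_gt.
    - by near: d; exact: HT.
  pose Z := Aset gs k s `&` [set w | d <= h k w].
  have mA := mAset k s cg.
  have mC : measurable [set w | d <= h k w].
    apply: mset_bool; apply: measurable_realfun.measurable_fun_ler => //; exact: measurable_cst.
  have mZ : measurable Z by exact: measurableI.
  have PZ : Pr Z <= 0.
    have := @Rint_bound_split_ge (h k) _ _ _ d 0 (mh k) (hb k) mA mC (fun w _ H => H) (fun w _ _ => h0 k w).
    rewrite Hz mul0r addr0 -/Z => H.
    by rewrite -(pmulr_rle0 _ d0).
  have mA' := mAset k s (gm_classifier c).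
  have mB : measurable (\big[setU/set0]_(j <- index_enum 'I_K) Tie c s j k d).
    by apply: bigsetU_measurable => j _; exact: mTie.
  have sub : Aset gs k s `<=` Aset (gm c) k s `|` (Z `|` \big[setU/set0]_(j <- index_enum 'I_K) Tie c s j k d).
    move=> w Aw; have [E|jk] := eqVneq (gm c (X w) s) k.
      by left; case: Aw => _ Sw; split => //; rewrite Sw.
    have [Hc|Hc] := pselect (d <= h k w); first by right; left.
    right; right; apply/in_bigsetU; exists (gm c (X w) s); first exact: mem_index_enum.
    case: Aw => _ Sw; split => //; split => //; rewrite sc_gm; split.
      by move/negP: Hc; rewrite -ltNge /h; lra.
    exact: le_msc.
  have := Pr_le mA (measurableU _ _ mA' (measurableU _ _ mZ mB)) sub.
  have := PrU2 mA' (measurableU _ _ mZ mB).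
  have := PrU2 mZ mB.
  have : Pr (\big[setU/set0]_(j <- index_enum 'I_K) Tie c s j k d) <= \sum_(j < K) eta.
    apply: (le_trans (Pr_bigU _ _)) => [j|]; first exact: mTie.
    by apply: ler_sum => j _; exact: Hd.
  rewrite sumr_const card_ord -mulr_natr.
  move: (Pr (Aset gs k s)) (Pr (Aset (gm c) k s)) (Pr Z) PZ => a1 a2 z PZ.
  move: (Pr (\big[setU/set0]_(j <- index_enum 'I_K) _)) => b.
  move: (Pr (Z `|` _)) (Pr (_ `|` (Z `|` _))) => u1 u2.
  lra.
apply: sum_le_eq => //.
rewrite -(Pr_partition (mS s) (fun k => mAset k s cg) (@Aset_disj gs s) (Aset_cover gs s)).
by rewrite -(Pr_partition (mS s) (fun k => mAset k s (gm_classifier c)) (@Aset_disj (gm c) s) (Aset_cover (gm c) s)).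
Unshelve. all: end_near. Qed.


Lemma Dk_Aset g k : Dk P X S g k = Pr (Aset g k true) / pis true - Pr (Aset g k false) / pis false.
Proof. by []. Qed.

Lemma fair_le_risk g (l1 l2 : 'I_K -> R) eps :
  (forall k, 0 <= l1 k) -> (forall k, 0 <= l2 k) -> eps_fair P X S eps g ->
  fair_risk P X S Y eps l1 l2 g <= risk P X S Y g.
Proof.
move=> l10 l20 fg; rewrite /fair_risk.
have S1 : \sum_k l1 k * (Dk P X S g k - eps) <= 0.
  apply: sumr_le0 => k _; apply: mulr_ge0_le0 => //.
  by rewrite subr_le0; apply: le_trans (ler_norm _) (fg k).
have S2 : \sum_k l2 k * (- Dk P X S g k - eps) <= 0.
  apply: sumr_le0 => k _; apply: mulr_ge0_le0 => //.
  by rewrite subr_le0; apply: le_trans (fg k); rewrite -normrN ler_norm.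
lra.
Qed.

Lemma fair_risk_eq_risk g (l1 l2 : 'I_K -> R) eps :
  (forall k, l1 k * (Dk P X S g k - eps) = 0) -> (forall k, l2 k * (- Dk P X S g k - eps) = 0) ->
  fair_risk P X S Y eps l1 l2 g = risk P X S Y g.
Proof.
move=> H1 H2; rewrite /fair_risk.
have -> : \sum_k l1 k * (Dk P X S g k - eps) = 0 by apply: big1 => k _; exact: H1.
have -> : \sum_k l2 k * (- Dk P X S g k - eps) = 0 by apply: big1 => k _; exact: H2.
by rewrite !addr0.
Qed.

Lemma J_eq_of_max gs c s : classifier gs ->
  (forall x k, sc c k x s <= sc c (gs x s) x s) -> Jv gs c s = Mv c s.
Proof.
move=> cg Hm.
rewrite /Mv (@Rint_Aset gs _ (Bd c s) s cg (mscO c s) (fun w => msc_bd c (X w) s)).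
apply: eq_bigr => k _; apply: eq_Rintegral => w; rewrite inE /Aset /= => -[H1 H2].
have E : gs (X w) s = k by rewrite -H2.
apply/eqP; rewrite eq_le le_msc /=; apply: msc_le => j; rewrite -E; exact: Hm.
Qed.

Section Final.
Variables (eps : R) (l1 l2 : 'I_K -> R).
Hypotheses (eps0 : 0 <= eps) (l10 : forall k, 0 <= l1 k) (l20 : forall k, 0 <= l2 k)
  (Hmin : forall m1 m2 : 'I_K -> R, (forall k, 0 <= m1 k) -> (forall k, 0 <= m2 k) ->
     Hdual P X S eps p l1 l2 <= Hdual P X S eps p m1 m2).

Local Notation c := (fun j => l1 j - l2 j).
Local Notation gs0 := (gm (fun j => l1 j - l2 j)).

Lemma gs0_fair : eps_fair P X S eps gs0.
Proof. by move=> k; case: (kkt l10 l20 Hmin k). Qed.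

Lemma gs0_risk : risk P X S Y gs0 = 1 - Hdual P X S eps p l1 l2.
Proof.
rewrite -(fair_risk_gm l1 l2 eps) fair_risk_eq_risk // => k; by case: (kkt l10 l20 Hmin k) => _ [].
Qed.

Lemma gs0_opt g : classifier g -> eps_fair P X S eps g -> risk P X S Y gs0 <= risk P X S Y g.
Proof.
move=> cg fg; rewrite gs0_risk; apply: le_trans (fair_risk_lb l1 l2 eps cg) _.
exact: fair_le_risk.
Qed.

Lemma part1_rev gs : classifier gs ->
  (forall g, classifier g -> fair_risk P X S Y eps l1 l2 gs <= fair_risk P X S Y eps l1 l2 g) ->
  eps_fair P X S eps gs /\ forall g, classifier g -> eps_fair P X S eps g ->
    risk P X S Y gs <= risk P X S Y g.
Proof.
move=> cg Hfr.
have e1 := Hfr _ (gm_classifier c); rewrite fair_risk_gm in e1.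
have e2 := fair_risk_lb l1 l2 eps cg.
have hJ s : Jv gs c s = Mv c s.
  have JT := J_le_M c true cg; have JF := J_le_M c false cg.
  move: e1; rewrite fair_risk_J // Hdual_M => e1.
  have pT := pi0 true; have pF := pi0 false.
  have hT : Jv gs c true / pis true <= Mv c true / pis true by rewrite ler_pM2r ?invr_gt0.
  have hF : Jv gs c false / pis false <= Mv c false / pis false by rewrite ler_pM2r ?invr_gt0.
  have eT : Jv gs c true / pis true = Mv c true / pis true by lra.
  have eF : Jv gs c false / pis false = Mv c false / pis false by lra.
  case: (s).
  - by move/(congr1 (fun x => x * pis true)): eT; rewrite !divfK ?lt0r_neq0.
  - by move/(congr1 (fun x => x * pis false)): eF; rewrite !divfK ?lt0r_neq0.
have hD k : Dk P X S gs k = Dk P X S gs0 k.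
  by rewrite !Dk_Aset !(Aset_eq cg (hJ _)).
have Hk := kkt l10 l20 Hmin.
have fgs : eps_fair P X S eps gs by move=> k; rewrite hD; case: (Hk k).
split => // g cg' fg.
have : risk P X S Y gs = risk P X S Y gs0.
  rewrite gs0_risk -(fair_risk_eq_risk (g := gs) (l1 := l1) (l2 := l2) (eps := eps)).
  - by apply/eqP; rewrite eq_le e1 e2.
  - by move=> k; rewrite hD; case: (Hk k) => _ [].
  - by move=> k; rewrite hD; case: (Hk k) => _ [].
by move=> ->; exact: gs0_opt.
Qed.

Lemma part1_fwd gs : classifier gs ->
  (eps_fair P X S eps gs /\ forall g, classifier g -> eps_fair P X S eps g ->
    risk P X S Y gs <= risk P X S Y g) ->
  forall g, classifier g -> fair_risk P X S Y eps l1 l2 gs <= fair_risk P X S Y eps l1 l2 g.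
Proof.
move=> cg [fgs Hopt] g cg'.
apply: (le_trans (fair_le_risk l10 l20 fgs)).
apply: (le_trans (Hopt _ (gm_classifier c) gs0_fair)).
by rewrite gs0_risk; exact: fair_risk_lb.
Qed.

Lemma part2 gs : classifier gs ->
  (forall x s k, score P S p l1 l2 k x s <= score P S p l1 l2 (gs x s) x s) ->
  eps_fair P X S eps gs /\ forall g, classifier g -> eps_fair P X S eps g ->
    risk P X S Y gs <= risk P X S Y g.
Proof.
move=> cg Hm; apply: part1_rev => // g cg'.
have -> : fair_risk P X S Y eps l1 l2 gs = 1 - Hdual P X S eps p l1 l2.
  rewrite fair_risk_J // Hdual_M !(@J_eq_of_max gs c) //; last by move=> x k; exact: Hm.
  - ring.
  - by move=> x k; exact: Hm.
exact: fair_risk_lb.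
Qed.

End Final.

End Main.

Unset Implicit Arguments.
Set Strict Implicit.

Theorem proposition2 (R : realType) (dO : measure_display) (Om : measurableType dO)
  (P : probability Om R) (dX : measure_display) (T : measurableType dX)
  (X : Om -> T) (S : Om -> bool) (K : nat) (Y : Om -> 'I_K)
  (p : 'I_K -> T -> bool -> R) (eps : R) (l1 l2 : 'I_K -> R) :
  measurable_fun setT X ->
  (forall s : bool, measurable [set w | S w = s]) ->
  (forall k : 'I_K, measurable [set w | Y w = k]) ->
  (forall s : bool, 0 < piS P S s) ->
  is_cond_prob P X S Y p ->
  0 <= eps ->
  continuity_assumption P X S p ->
  (forall k, 0 <= l1 k) -> (forall k, 0 <= l2 k) ->
  (forall m1 m2 : 'I_K -> R, (forall k, 0 <= m1 k) -> (forall k, 0 <= m2 k) ->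
     Hdual P X S eps p l1 l2 <= Hdual P X S eps p m1 m2) ->
  (forall gs : T -> bool -> 'I_K, classifier gs ->
     ((eps_fair P X S eps gs /\
       forall g, classifier g -> eps_fair P X S eps g ->
         risk P X S Y gs <= risk P X S Y g)
      <->
      (forall g, classifier g ->
         fair_risk P X S Y eps l1 l2 gs <= fair_risk P X S Y eps l1 l2 g)))
  /\
  (forall gs : T -> bool -> 'I_K, classifier gs ->
     (forall x s k, score P S p l1 l2 k x s <= score P S p l1 l2 (gs x s) x s) ->
     eps_fair P X S eps gs /\
     forall g, classifier g -> eps_fair P X S eps g ->
       risk P X S Y gs <= risk P X S Y g).
Proof.
move=> mX mS mY pi0 cp eps0 cont l10 l20 Hmin.
have [w0 _] : exists w : Om, True.
  apply: contrapT => H.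
  have : P setT = 0%E.
    rewrite (_ : setT = set0) ?measure0 //; apply/seteqP; split => // w _.
    by apply: H; exists w.
  by rewrite probability_setT => /eqP; rewrite onee_eq0.
pose k0 := Y w0.
split.
- move=> gs cg; split.
  + move=> H g cg'; exact: (part1_fwd k0 mX mS mY pi0 cp cont l10 l20 Hmin cg H cg').
  + move=> H; exact: (part1_rev k0 mX mS mY pi0 cp cont l10 l20 Hmin cg H).
- move=> gs cg H; exact: (part2 k0 mX mS mY pi0 cp cont l10 l20 Hmin cg H).
Qed.
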